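(* Let $R$ be a commutative noetherian ring and $\mathcal S$ a subcategory of $R$-modules. Then $\mathcal S\mathcal N\subseteq\mathcal N(\mathcal S)_{\rm quot}$. In particular, if $\mathcal S$ is closed under quotients and extensions, then $\mathcal N\mathcal S$ is closed under quotients and extensions.
   Context: $\mathcal N$ is the subcategory of finitely generated $R$-modules. For subcategories $\mathcal X,\mathcal Y$, $\mathcal X\mathcal Y$ is the class of modules $M$ admitting an exact sequence $0\to L\to M\to N\to 0$ with $L\in\mathcal X$, $N\in\mathcal Y$. $(\mathcal S)_{\rm quot}$ is the class of all quotient modules of modules in $\mathcal S$. $\mathcal X$ is closed under extensions if $\mathcal X\mathcal X=\mathcal X$. *)

(* Defs.v *)
From HB Require Import structures.
From mathcomp Require Import all_boot all_order all_algebra.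
Set Implicit Arguments. Unset Strict Implicit. Unset Printing Implicit Defensive.
Import GRing.Theory.
Local Open Scope ring_scope.

Definition is_ideal (R : comNzRingType) (I : R -> Prop) : Prop :=
  I 0 /\ (forall x y, I x -> I y -> I (x + y)) /\ (forall r x, I x -> I (r * x)).

Definition noetherian (R : comNzRingType) : Prop :=
  forall I : R -> Prop, is_ideal I ->
    exists s : seq R, forall x, I x <->
      exists c : 'I_(size s) -> R, x = \sum_(i < size s) c i * s`_i.

(* A "subcategory" of R-modules: a class of R-modules. *)
Definition modclass (R : comNzRingType) := lmodType R -> Prop.

Definition fin_gen (R : comNzRingType) : modclass R := fun M =>
  exists s : seq M, forall m : M,
    exists c : 'I_(size s) -> R, m = \sum_(i < size s) c i *: s`_i.

Definition short_exact (R : comNzRingType) (L M N : lmodType R)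
  (f : {linear L -> M}) (g : {linear M -> N}) : Prop :=
  injective f /\ (forall n : N, exists m : M, g m = n) /\
  (forall m : M, g m = 0 <-> exists l : L, f l = m).

(* X Y : modules M with 0 -> L -> M -> N -> 0 exact, L in X, N in Y. *)
Definition ext_class (R : comNzRingType) (X Y : modclass R) : modclass R := fun M =>
  exists (L N : lmodType R) (f : {linear L -> M}) (g : {linear M -> N}),
    X L /\ Y N /\ short_exact f g.

Definition quot_class (R : comNzRingType) (S : modclass R) : modclass R := fun M =>
  exists (X : lmodType R) (p : {linear X -> M}), S X /\ (forall m : M, exists x, p x = m).

Definition subclass (R : comNzRingType) (X Y : modclass R) : Prop :=
  forall M, X M -> Y M.

Definition closed_under_quotients (R : comNzRingType) (X : modclass R) : Prop :=
  subclass (quot_class X) X.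

Definition closed_under_extensions (R : comNzRingType) (X : modclass R) : Prop :=
  forall M, ext_class X X M <-> X M.

(* Main.v *)
Require Import Defs.
From HB Require Import structures.
From mathcomp Require Import all_boot all_order all_algebra.
From mathcomp Require Import boolp.
Set Implicit Arguments. Unset Strict Implicit. Unset Printing Implicit Defensive.
Import GRing.Theory.
Local Open Scope ring_scope.

Definition subP (R : comNzRingType) (M : lmodType R) (P : M -> Prop) :=
  P 0 /\ (forall x y, P x -> P y -> P (x + y)) /\ (forall a x, P x -> P (a *: x)).

Section Sub.
Variables (R : comNzRingType) (M : lmodType R) (P : M -> Prop) (HP : subP P).

Definition subT (_ : subP P) := {x : M | P x}.
Local Notation sT := (subT HP).
HB.instance Definition _ := gen_eqMixin sT.
HB.instance Definition _ := gen_choiceMixin sT.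

Lemma sub_eq (x y : sT) : proj1_sig x = proj1_sig y -> x = y.
Proof.
move: x y => [x px] [y py] /= exy; subst y; congr exist; exact: Prop_irrelevance.
Qed.

Let P0 : P 0. Proof. by case: HP. Qed.
Let PD x y : P x -> P y -> P (x + y). Proof. by case: HP => _ [H _]; apply: H. Qed.
Let PZ a x : P x -> P (a *: x). Proof. by case: HP => _ [_ H]; apply: H. Qed.
Let PN x : P x -> P (- x). Proof. by move=> px; rewrite -scaleN1r; apply: PZ. Qed.

Definition sub0 : sT := exist _ 0 P0.
Definition subadd (x y : sT) : sT :=
  exist _ (proj1_sig x + proj1_sig y) (PD (proj2_sig x) (proj2_sig y)).
Definition subopp (x : sT) : sT := exist _ (- proj1_sig x) (PN (proj2_sig x)).
Definition subscale a (x : sT) : sT := exist _ (a *: proj1_sig x) (PZ a (proj2_sig x)).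

Lemma subaddA : associative subadd.
Proof. by move=> x y z; apply: sub_eq; rewrite /= addrA. Qed.
Lemma subaddC : commutative subadd.
Proof. by move=> x y; apply: sub_eq; rewrite /= addrC. Qed.
Lemma subadd0 : left_id sub0 subadd.
Proof. by move=> x; apply: sub_eq; rewrite /= add0r. Qed.
Lemma subaddN : left_inverse sub0 subopp subadd.
Proof. by move=> x; apply: sub_eq; rewrite /= addNr. Qed.
HB.instance Definition _ := GRing.isZmodule.Build sT subaddA subaddC subadd0 subaddN.
Lemma subscaleA a b v : subscale a (subscale b v) = subscale (a * b) v.
Proof. by apply: sub_eq; rewrite /= scalerA. Qed.
Lemma subscale1 : left_id 1 subscale.
Proof. by move=> x; apply: sub_eq; rewrite /= scale1r. Qed.
Lemma subscaleDr : right_distributive subscale +%R.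
Proof. by move=> a x y; apply: sub_eq; rewrite /= scalerDr. Qed.
Lemma subscaleDl v : {morph subscale^~ v: a b / a + b}.
Proof. by move=> a b; apply: sub_eq; rewrite /= scalerDl. Qed.
HB.instance Definition _ := GRing.Zmodule_isLmodule.Build R sT subscaleA subscale1 subscaleDr subscaleDl.

Definition incl (x : sT) : M := proj1_sig x.
Lemma incl_inj : injective incl. Proof. exact: sub_eq. Qed.
Lemma incl_lin : linear incl. Proof. by []. Qed.
HB.instance Definition _ := GRing.isLinear.Build R sT M _ incl incl_lin.
End Sub.
Section MkLin.
Variables (R : comNzRingType) (U V : lmodType R) (f : U -> V) (Hf : linear f).
Definition mklin of linear f := f.
HB.instance Definition _ := GRing.isLinear.Build R U V _ (mklin Hf) Hf.
End MkLin.

Section Quot.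
Variables (R : comNzRingType) (M : lmodType R) (P : M -> Prop) (HP : subP P).
Let P0 : P 0. Proof. by case: HP. Qed.
Let PD x y : P x -> P y -> P (x + y). Proof. by case: HP => _ [H _]; apply: H. Qed.
Let PZ a x : P x -> P (a *: x). Proof. by case: HP => _ [_ H]; apply: H. Qed.
Let PN x : P x -> P (- x). Proof. by move=> px; rewrite -scaleN1r; apply: PZ. Qed.
Let PB x y : P x -> P y -> P (x - y). Proof. by move=> px py; apply: PD => //; apply: PN. Qed.

Definition coset (m : M) : M -> Prop := fun x => P (x - m).
Definition quotT (_ : subP P) := {C : M -> Prop | exists m, C = coset m}.
Local Notation qT := (quotT HP).
HB.instance Definition _ := gen_eqMixin qT.
HB.instance Definition _ := gen_choiceMixin qT.

Definition qproj (m : M) : qT := exist _ (coset m) (ex_intro _ m erefl).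

Lemma qproj_eq m m' : qproj m = qproj m' <-> P (m - m').
Proof.
split.
  move=> /(congr1 (@proj1_sig _ _)) /= /(congr1 (fun C => C m)).
  rewrite /coset subrr => <-. by [].
move=> pm; apply: (@eq_exist _ _ _ _ _ _ _); rewrite /coset.
apply: funext => x; apply: propext; split => h.
  by rewrite -(subrKA m) ; apply: PD.
rewrite -[x - m](subrKA m').
have : P (m' - m) by rewrite -opprB; apply: PN.
by move=> h2; apply: PD.
Qed.

Lemma qproj_surj (C : qT) : exists m, qproj m = C.
Proof.
move: C => [C [m e]]; exists m; subst C; exact: (@eq_exist _ _ _ _ _ _ _).
Qed.
Definition qrep (C : qT) : M := proj1_sig (cid (qproj_surj C)).
Lemma qrepK C : qproj (qrep C) = C.
Proof. by rewrite /qrep; case: (cid _). Qed.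

Definition q0 : qT := qproj 0.
Definition qadd (C D : qT) := qproj (qrep C + qrep D).
Definition qopp (C : qT) := qproj (- qrep C).
Definition qscale a (C : qT) := qproj (a *: qrep C).

Lemma qrep_rel m : P (qrep (qproj m) - m).
Proof. by apply/qproj_eq; rewrite qrepK. Qed.

Lemma qaddE m m' : qadd (qproj m) (qproj m') = qproj (m + m').
Proof.
apply/qproj_eq; rewrite opprD addrACA; apply: PD; exact: qrep_rel.
Qed.
Lemma qoppE m : qopp (qproj m) = qproj (- m).
Proof. by apply/qproj_eq; rewrite -opprD; apply: PN; exact: qrep_rel. Qed.
Lemma qscaleE a m : qscale a (qproj m) = qproj (a *: m).
Proof. by apply/qproj_eq; rewrite -scalerBr; apply: PZ; exact: qrep_rel. Qed.

Lemma qaddA : associative qadd.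
Proof.
move=> x y z; case: (qproj_surj x) => a <-; case: (qproj_surj y) => b <-.
by case: (qproj_surj z) => c <-; rewrite !qaddE addrA.
Qed.
Lemma qaddC : commutative qadd.
Proof.
move=> x y; case: (qproj_surj x) => a <-; case: (qproj_surj y) => b <-.
by rewrite !qaddE addrC.
Qed.
Lemma qadd0 : left_id q0 qadd.
Proof. by move=> x; case: (qproj_surj x) => a <-; rewrite /q0 qaddE add0r. Qed.
Lemma qaddN : left_inverse q0 qopp qadd.
Proof. by move=> x; case: (qproj_surj x) => a <-; rewrite qoppE qaddE addNr. Qed.
HB.instance Definition _ := GRing.isZmodule.Build qT qaddA qaddC qadd0 qaddN.
Lemma qaddE' m m' : (qproj m + qproj m' : qT) = qproj (m + m').
Proof. exact: qaddE. Qed.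
Lemma qscaleA a b v : qscale a (qscale b v) = qscale (a * b) v.
Proof. by case: (qproj_surj v) => x <-; rewrite !qscaleE scalerA. Qed.
Lemma qscale1 : left_id 1 qscale.
Proof. by move=> v; case: (qproj_surj v) => x <-; rewrite !qscaleE scale1r. Qed.
Lemma qscaleDr : right_distributive qscale +%R.
Proof.
move=> a v w; case: (qproj_surj v) => x <-; case: (qproj_surj w) => y <-.
by rewrite qaddE' !qscaleE qaddE' scalerDr.
Qed.
Lemma qscaleDl v : {morph qscale^~ v: a b / a + b}.
Proof.
move=> a b; case: (qproj_surj v) => x <-.
by rewrite !qscaleE qaddE' scalerDl.
Qed.
HB.instance Definition _ := GRing.Zmodule_isLmodule.Build R qT qscaleA qscale1 qscaleDr qscaleDl.

Lemma qproj_lin : linear qproj.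
Proof. by move=> a x y; rewrite -qaddE'; congr (_ + _); symmetry; exact: qscaleE. Qed.
HB.instance Definition _ := GRing.isLinear.Build R M qT _ qproj qproj_lin.

Lemma qproj0 m : qproj m = 0 <-> P m.
Proof. by rewrite -[0 : qT]/(qproj 0) qproj_eq subr0. Qed.
End Quot.

Section Generic.
Variable R : comNzRingType.

Lemma sum_cast (V : lmodType R) m n (e : m = n) (F : 'I_n -> V) :
  \sum_(j < m) F (cast_ord e j) = \sum_(i < n) F i.
Proof. by case: n / e F => F; apply: eq_bigr => i _; rewrite cast_ord_id. Qed.

Lemma fin_gen_of (M : lmodType R) n (v : 'I_n -> M) :
  (forall m, exists c : 'I_n -> R, m = \sum_(i < n) c i *: v i) -> fin_gen M.
Proof.
move=> H; exists (map v (enum 'I_n)) => m.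
have e : size (map v (enum 'I_n)) = n by rewrite size_map size_enum_ord.
case: (H m) => c ->; exists (fun j => c (cast_ord e j)).
rewrite -(sum_cast e); apply: eq_bigr => j _.
rewrite (nth_map (cast_ord e j)); last by rewrite -(size_map v) ltn_ord.
by rewrite -[X in nth _ _ X]/(nat_of_ord (cast_ord e j)) nth_ord_enum.
Qed.

Lemma ext_sub_quot (X Y : modclass R) (M : lmodType R) (P : M -> Prop) (HP : subP P) :
  X (subT HP) -> Y (quotT HP) -> ext_class X Y M.
Proof.
move=> hX hY; exists (subT HP), (quotT HP), (@incl _ _ _ HP), (@qproj _ _ _ HP).
split => //; split => //; split; first exact: incl_inj.
split; first exact: qproj_surj.
move=> m; rewrite qproj0; split; first by move=> pm; exists (exist _ m pm).
by case=> -[l pl] <-.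
Qed.

Lemma factor (M B Q : lmodType R) (g : {linear M -> B}) (h : {linear M -> Q}) :
  (forall b, exists m, g m = b) -> (forall m, g m = 0 -> h m = 0) ->
  exists k : {linear B -> Q}, forall m, k (g m) = h m.
Proof.
move=> gs hz.
pose pre b := proj1_sig (cid (gs b)).
have preK b : g (pre b) = b by rewrite /pre; case: (cid _).
have hk m : h (pre (g m)) = h m.
  apply/eqP; rewrite -subr_eq0 -linearB; apply/eqP/hz.
  by rewrite linearB preK subrr.
have klin : linear (fun b => h (pre b)).
  move=> a x y; rewrite -!linearZ -linearD -[in RHS]hk.
  by rewrite linearD linearZ !preK.
by exists (mklin klin) => m; rewrite /= /mklin hk.
Qed.

Definition span (M : lmodType R) (t : seq M) : M -> Prop := fun m =>
  exists c : 'I_(size t) -> R, m = \sum_(i < size t) c i *: t`_i.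

Lemma span_subP (M : lmodType R) (t : seq M) : subP (span t).
Proof.
split; first by exists (fun _ => 0); rewrite big1 // => i _; rewrite scale0r.
split.
  move=> x y [c ->] [d ->]; exists (fun i => c i + d i).
  by rewrite -big_split; apply: eq_bigr => i _; rewrite scalerDl.
move=> a x [c ->]; exists (fun i => a * c i).
by rewrite scaler_sumr; apply: eq_bigr => i _; rewrite scalerA.
Qed.

Lemma span_nth (M : lmodType R) (t : seq M) (i : 'I_(size t)) : span t (t`_i).
Proof.
exists (fun j => (j == i)%:R); rewrite (bigD1 i) //= eqxx scale1r big1 ?addr0 //.
by move=> j /negbTE ->; rewrite scale0r.
Qed.

Lemma span_mem (M : lmodType R) (t : seq M) x : x \in t -> span t x.
Proof.
move=> xt; have hi : (index x t < size t)%N by rewrite index_mem.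
by have := span_nth (Ordinal hi); rewrite /= nth_index.
Qed.

Lemma subP_sum (M : lmodType R) (P : M -> Prop) (HP : subP P) I (r : seq I) (F : I -> M) (c : I -> R) :
  (forall i, P (F i)) -> P (\sum_(i <- r) c i *: F i).
Proof.
case: HP => P0 [PD PZ] H; apply: (big_ind P) => //.
by move=> i _; apply: PZ.
Qed.

Lemma span_fg (M : lmodType R) (t : seq M) : fin_gen (subT (span_subP t)).
Proof.
pose v (i : 'I_(size t)) : subT (span_subP t) := exist _ (t`_i) (span_nth i).
apply: (@fin_gen_of _ _ v) => -[m [c e]]; exists c; apply: incl_inj.
pose f : {linear subT (span_subP t) -> M} := @incl _ _ _ (span_subP t).
transitivity m; first by [].
rewrite e (raddf_sum f); by apply: eq_bigr.
Qed.

Lemma fg_surj (L M : lmodType R) (h : {linear L -> M}) :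
  (forall m, exists l, h l = m) -> fin_gen L -> fin_gen M.
Proof.
move=> hs [s Hs]; apply: (@fin_gen_of _ _ (fun i : 'I_(size s) => h s`_i)) => m.
case: (hs m) => l <-; case: (Hs l) => c ->; exists c.
by rewrite linear_sum; apply: eq_bigr => i _; rewrite linearZZ.
Qed.

Lemma comp_lin (U V W : lmodType R) (f : {linear U -> V}) (g : {linear V -> W}) :
  linear (fun x => g (f x)).
Proof. by move=> a x y; rewrite (linearP f) (linearP g). Qed.

End Generic.

Section Main.
Variable R : comNzRingType.

Lemma part1 (S : modclass R) :
  subclass (ext_class S (@fin_gen R)) (ext_class (@fin_gen R) (quot_class S)).
Proof.
move=> M [L [N [f [g [SL [[sN HN] [finj [gs gker]]]]]]]].
pose lift y := proj1_sig (cid (gs y)).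
have liftK y : g (lift y) = y by rewrite /lift; case: (cid _).
pose t := map lift sN.
apply: (@ext_sub_quot _ _ _ _ _ (span_subP t)); first exact: span_fg.
have klin : linear (fun l => @qproj _ _ _ (span_subP t) (f l)).
  by move=> a x y; rewrite !linearP.
exists L, (mklin klin); split => // C.
case: (qproj_surj C) => m <-.
case: (HN (g m)) => c hc.
pose m' := \sum_(i < size sN) c i *: lift sN`_i.
have gm' : g m' = g m.
  by rewrite hc linear_sum; apply: eq_bigr => i _; rewrite linearZZ liftK.
have [l hl] : exists l, f l = m - m' by apply/gker; rewrite linearB gm' subrr.
exists l; rewrite /= /mklin hl linearB.
rewrite [X in _ - X](_ : _ = 0) ?subr0 //.
apply/qproj0; apply: (subP_sum (span_subP t)) => i; apply: span_mem.
by apply: map_f; apply: mem_nth.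
Qed.


Lemma part2a (S : modclass R) (QC : closed_under_quotients S) :
  closed_under_quotients (ext_class (@fin_gen R) S).
Proof.
move=> Q [M [p [[A [B [f [g [fgA [SB [finj [gs gker]]]]]]]] ps]]].
pose P q := exists a, p (f a) = q.
have HP : subP P.
  split; first by exists 0; rewrite !linear0.
  split; first by move=> x y [a <-] [b <-]; exists (a + b); rewrite !linearD.
  by move=> r x [a <-]; exists (r *: a); rewrite !linearZZ.
apply: (@ext_sub_quot _ _ _ _ _ HP).
  have hlin : linear (fun a => (exist P (p (f a)) (ex_intro _ a erefl) : subT HP)).
    by move=> r x y; apply: sub_eq => /=; rewrite !linearP.
  apply: (@fg_surj _ _ _ (mklin hlin)) fgA.
  by move=> -[q [a e]]; exists a; apply: sub_eq => /=.
apply: QC; exists B.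
have hlin : linear (fun m => @qproj _ _ _ HP (p m)).
  by move=> r x y; rewrite !linearP.
have hk := @factor _ _ _ _ g (mklin hlin) gs.
have : forall m, g m = 0 -> mklin hlin m = 0.
  by move=> m /gker [a <-]; apply/qproj0; exists a.
move=> /hk {hk} [k hk].
exists k; split => // C; case: (qproj_surj C) => q <-; case: (ps q) => m <-.
by exists (g m); rewrite hk.
Qed.


Lemma part2b (S : modclass R) (QC : closed_under_quotients S)
  (EC : closed_under_extensions S) :
  closed_under_extensions (ext_class (@fin_gen R) S).
Proof.
move=> M; split; last first.
  move=> hM.
  pose Z0 (x : M) := x = 0.
  have HZ : subP Z0.
    split; first by [].
    split; first by move=> x y -> ->; rewrite /Z0 addr0.
    by move=> a x ->; rewrite /Z0 scaler0.
  pose Z := subT HZ.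
  have allz (z : Z) : z = 0 by apply: sub_eq; case: z.
  have zlin : linear (fun _ : M => (0 : Z)) by move=> a x y; rewrite scaler0 addr0.
  have idlin : linear (fun z : Z => z) by [].
  have idMlin : linear (fun z : M => z) by [].
  have NSZ : ext_class (@fin_gen R) S Z.
    case: hM => [A [B [f [g [_ [SB _]]]]]].
    have zBlin : linear (fun _ : B => (0 : Z)) by move=> a x y; rewrite scaler0 addr0.
    have SZ : S Z by apply: QC; exists B, (mklin zBlin); split => // z; exists 0; rewrite (allz z).
    have zZlin : linear (fun _ : Z => (0 : Z)) by move=> a x y; rewrite scaler0 addr0.
    exists Z, Z, (mklin idlin), (mklin zZlin); split.
      by exists [::] => z; exists (fun _ => 0); rewrite big_ord0 (allz z).
    split => //; split; first by move=> x y.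
    split; first by move=> n; exists 0; rewrite (allz n).
    by move=> m; split => // _; exists m.
  exists M, Z, (mklin idMlin), (mklin zlin); split => //; split => //.
  split; first by move=> x y.
  split; first by move=> n; exists 0; rewrite (allz n).
  by move=> m; split => // _; exists m.
move=> [A [B [f [g [[A1 [A2 [fA [gA [[sA1 HA1] [SA2 [fAi [gAs gAk]]]]]]]] 
  [[B1 [B2 [fB [gB [[sB1 HB1] [SB2 [fBi [gBs gBk]]]]]]]] [finj [gs gker]]]]]]]].
pose lift y := proj1_sig (cid (gs y)).
have liftK y : g (lift y) = y by rewrite /lift; case: (cid _).
pose t := map (fun b => lift (fB b)) sB1 ++ map (fun a => f (fA a)) sA1.
pose HP := span_subP t.
apply: (@ext_sub_quot _ _ _ _ _ HP); first exact: span_fg.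
apply/(EC _).
pose P1 (x : quotT HP) := exists m, (exists b1, g m = fB b1) /\ @qproj _ _ _ HP m = x.
have HP1 : subP P1.
  split; first by exists 0; split; [exists 0; rewrite !linear0 | rewrite linear0].
  split.
    move=> x y [m [[b e] <-]] [m' [[b' e'] <-]]; exists (m + m'); split.
      by exists (b + b'); rewrite !linearD e e'.
    by rewrite linearD.
  move=> r x [m [[b e] <-]]; exists (r *: m); split.
    by exists (r *: b); rewrite !linearZZ e.
  by rewrite linearZZ.
apply: (@ext_sub_quot _ _ _ _ _ HP1).
  apply: QC; exists A2.
  have P1f a : P1 (@qproj _ _ _ HP (f a)).
    by exists (f a); split => //; exists 0; rewrite linear0; apply/gker; exists a.
  have hlin : linear (fun a => (exist P1 (@qproj _ _ _ HP (f a)) (P1f a) : subT HP1)).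
    by move=> r x y; apply: sub_eq => /=; rewrite !linearP.
  have hk := @factor _ _ _ _ gA (mklin hlin) gAs.
  have : forall a, gA a = 0 -> mklin hlin a = 0.
    move=> a /gAk [a1 <-]; apply: sub_eq => /=; apply/qproj0.
    case: (HA1 a1) => c ->.
    have -> : f (fA (\sum_(i < size sA1) c i *: sA1`_i)) =
              \sum_(i < size sA1) c i *: f (fA sA1`_i).
      by rewrite !linear_sum; apply: eq_bigr => i _; rewrite !linearZZ.
    apply: (subP_sum HP) => i; apply: span_mem; rewrite mem_cat; apply/orP; right.
    by apply: (map_f (fun a => f (fA a))); apply: mem_nth.
  move=> /hk {hk} [k hk].
  exists k; split => // -[x [m [[b1 e] ex]]]; subst x.
  case: (HB1 b1) => c hc.
  pose m' := \sum_(i < size sB1) c i *: lift (fB sB1`_i).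
  have gm' : g m' = g m.
    rewrite e hc !linear_sum; apply: eq_bigr => i _; by rewrite !linearZZ liftK.
  have [a hl] : exists a, f a = m - m' by apply/gker; rewrite linearB gm' subrr.
  exists (gA a); rewrite hk; apply: sub_eq => /=.
  rewrite hl linearB [X in _ - X](_ : _ = 0) ?subr0 //.
  apply/qproj0; apply: (subP_sum HP) => i; apply: span_mem; rewrite mem_cat; apply/orP; left.
  by apply: (map_f (fun b => lift (fB b))); apply: mem_nth.
apply: QC; exists B2.
have gglin : linear (fun m => gB (g m)) := comp_lin g gB.
have hlin : linear (fun m => @qproj _ _ _ HP1 (@qproj _ _ _ HP m)) := comp_lin (@qproj _ _ _ HP) (@qproj _ _ _ HP1).
have ggs : forall b2, exists m, mklin gglin m = b2.
  move=> b2; case: (gBs b2) => b <-; case: (gs b) => m <-; by exists m.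
have hk := @factor _ _ _ _ (mklin gglin) (mklin hlin) ggs.
have : forall m, mklin gglin m = 0 -> mklin hlin m = 0.
  move=> m /= /gBk [b1 e]; apply/qproj0; exists m; split => //; by exists b1.
move=> /hk {hk} [k hk].
exists k; split => // C; case: (qproj_surj C) => y <-; case: (qproj_surj y) => m <-.
by exists (gB (g m)); exact: (hk m).
Qed.

End Main.

Theorem corollary2p4 (R : comNzRingType) (HR : noetherian R) (S : modclass R) :
  subclass (ext_class S (@fin_gen R)) (ext_class (@fin_gen R) (quot_class S)) /\
  (closed_under_quotients S -> closed_under_extensions S ->
     closed_under_quotients (ext_class (@fin_gen R) S) /\
     closed_under_extensions (ext_class (@fin_gen R) S)).
Proof.
split; first exact: part1.
by move=> QC EC; split; [exact: part2a | exact: part2b].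
Qed.
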